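(* Let $A\in\mathbb{R}_+^{n\times n}$ be a nonzero circulant matrix and $M=(A/\lambda(A))^{n^2}$ (max-algebraic power). Then $M$ is a Kleene star: $M\otimes M=M$ and $M_{i,i}=1$ for all $i$, equivalently $M=M^*:=I\oplus M\oplus M^2\oplus\dots\oplus M^{n-1}$.
   Context: Max algebra on $\mathbb{R}_+$ with $\oplus=\max$ and ordinary product; $A^t$ is the max-algebraic power and $I$ the identity matrix. A circulant matrix has $A_{i,j}=a_t$ with $t\equiv j-i\pmod n$, $t\in\{0,\dots,n-1\}$. $\lambda(A)$ is the greatest max-algebraic eigenvalue, i.e. the maximum cycle geometric mean; it is nonzero for nonzero circulant $A$. *)

(* Defs.v *)
(* real numbers from Stdlib Reals; matrices of size n are
   functions nat -> nat -> R, only entries with indices < n are meaningful. *)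
From Stdlib Require Import Reals List Arith.
Import ListNotations.
Open Scope R_scope.

(* iterated max over k < m of f k, with neutral element 0 (entries are >= 0) *)
Fixpoint bigmax (m : nat) (f : nat -> R) : R :=
  match m with
  | O => 0
  | S m' => Rmax (bigmax m' f) (f m')
  end.

Fixpoint bigprod (m : nat) (f : nat -> R) : R :=
  match m with
  | O => 1
  | S m' => bigprod m' f * f m'
  end.

Definition mat := nat -> nat -> R.

Definition mid : mat := fun i j => if Nat.eqb i j then 1 else 0.

Definition mmul (n : nat) (A B : mat) : mat :=
  fun i j => bigmax n (fun k => A i k * B k j).

Definition madd (A B : mat) : mat := fun i j => Rmax (A i j) (B i j).

Fixpoint mpow (n : nat) (A : mat) (t : nat) : mat :=
  match t with
  | O => mid
  | S t' => mmul n (mpow n A t') A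
  end.

Definition mscale (c : R) (A : mat) : mat := fun i j => c * A i j.

Definition mstar (n : nat) (M : mat) : mat :=
  fun i j => bigmax n (fun t => mpow n M t i j).

(* circulant matrix with first row a_0,...,a_{n-1}: A_{i,j} = a_t, t = (j-i) mod n *)
Definition circulant (n : nat) (a : nat -> R) : mat :=
  fun i j => a ((j + n - i) mod n)%nat.

(* elementary cycles: nonempty duplicate-free lists of indices < n;
   the cycle is i_0 -> i_1 -> ... -> i_{k-1} -> i_0 *)
Definition is_cycle (n : nat) (c : list nat) : Prop :=
  c <> [] /\ NoDup c /\ (forall i, In i c -> (i < n)%nat).

Definition cycle_weight (A : mat) (c : list nat) : R :=
  let k := length c in
  bigprod k (fun m => A (nth m c O) (nth ((m + 1) mod k) c O)).

(* geometric mean w^(1/k) of a nonnegative weight w (0 if w = 0) *)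
Definition gmean (w : R) (k : nat) : R :=
  if Req_EM_T w 0 then 0 else Rpower w (/ INR k).

Definition cycle_gmean (A : mat) (c : list nat) : R :=
  gmean (cycle_weight A c) (length c).

Definition is_lambda (n : nat) (A : mat) (l : R) : Prop :=
  (exists c, is_cycle n c /\ cycle_gmean A c = l) /\
  (forall c, is_cycle n c -> cycle_gmean A c <= l).

(* Main.v *)
Require Import Defs.
From Stdlib Require Import Reals List Arith Lia Lra Permutation Classical.
Import ListNotations.
Open Scope R_scope.

Lemma mod_M1 n k j : (k < n)%nat -> (j < n)%nat -> ((k + (j+n-k) mod n) mod n = j)%nat.
Proof. intros.
destruct (Nat.lt_ge_cases j k).
- rewrite (Nat.mod_small (j+n-k)) by lia. replace (k + (j+n-k))%nat with (j + 1*n)%nat by lia. rewrite Nat.Div0.mod_add. apply Nat.mod_small; lia.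
- replace (j+n-k)%nat with ((j-k) + 1*n)%nat by lia. rewrite Nat.Div0.mod_add. rewrite (Nat.mod_small (j-k)) by lia. replace (k + (j-k))%nat with j by lia. apply Nat.mod_small; lia. Qed.

Lemma mod_M2 n k x : (k < n)%nat -> (x < n)%nat -> (((k+x) mod n + n - k) mod n = x)%nat.
Proof. intros.
destruct (Nat.lt_ge_cases (k+x) n).
- rewrite (Nat.mod_small (k+x)) by lia. replace (k+x+n-k)%nat with (x + 1*n)%nat by lia. rewrite Nat.Div0.mod_add. apply Nat.mod_small; lia.
- replace (k+x)%nat with ((k+x-n) + 1*n)%nat by lia. rewrite Nat.Div0.mod_add. rewrite (Nat.mod_small (k+x-n)) by lia. replace (k+x-n+n-k)%nat with x by lia. apply Nat.mod_small; lia. Qed.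

Lemma mod_M3 n i x s : ((i + (x + s)) mod n = ((i + s) mod n + x) mod n)%nat.
Proof. rewrite Nat.Div0.add_mod_idemp_l. f_equal; lia. Qed.

Lemma mod_sub n i j t : (0 < n)%nat -> (i < j)%nat -> ((i*t) mod n = (j*t) mod n)%nat -> (((j-i)*t) mod n = 0)%nat.
Proof. intros. pose proof (Nat.div_mod (i*t) n ltac:(lia)). pose proof (Nat.div_mod (j*t) n ltac:(lia)).
rewrite Nat.mul_sub_distr_r. replace (j*t - i*t)%nat with ((j*t/n - i*t/n)*n)%nat by nia.
apply Nat.Div0.mod_mul. Qed.

Lemma mod_M4 n i v : ((i + n*v) mod n = i mod n)%nat.
Proof. rewrite Nat.mul_comm. apply Nat.Div0.mod_add. Qed.

Lemma bigmax_ge0 m f : 0 <= bigmax m f.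
Proof. induction m; simpl. lra. eapply Rle_trans; [exact IHm| apply Rmax_l]. Qed.

Lemma bigmax_ge m f k : (k < m)%nat -> f k <= bigmax m f.
Proof. induction m; intros; [lia|]. simpl. destruct (Nat.eq_dec k m).
subst; apply Rmax_r. eapply Rle_trans;[apply IHm; lia| apply Rmax_l]. Qed.

Lemma bigmax_le m f c : 0 <= c -> (forall k, (k<m)%nat -> f k <= c) -> bigmax m f <= c.
Proof. induction m; simpl; intros. lra. apply Rmax_lub. apply IHm; auto. apply H0; lia. Qed.

Lemma bigmax_cases m f : bigmax m f = 0 \/ exists k, (k<m)%nat /\ bigmax m f = f k.
Proof. induction m; simpl. left; auto. unfold Rmax; destruct (Rle_dec (bigmax m f) (f m)).
right; exists m; split; [lia|auto].
destruct IHm as [H|[k [Hk H]]]; [left|right; exists k; split; [lia|]]; auto. Qed.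

Lemma bigmax_ext m f g : (forall k, (k<m)%nat -> f k = g k) -> bigmax m f = bigmax m g.
Proof. induction m; simpl; intros; auto. rewrite IHm, H; auto. Qed.

Lemma mid_ge0 i j : 0 <= mid i j.
Proof. unfold mid; destruct Nat.eqb; lra. Qed.

Lemma mpow_ge0 n A t i j : 0 <= mpow n A t i j.
Proof. destruct t; simpl. apply mid_ge0. unfold mmul. apply bigmax_ge0. Qed.

Fixpoint lprod (b : nat -> R) (w : list nat) : R :=
  match w with [] => 1 | x :: w' => b x * lprod b w' end.
Fixpoint lsum (w : list nat) : nat :=
  match w with [] => 0%nat | x :: w' => (x + lsum w')%nat end.
Definition circ (n : nat) (b : nat -> R) : mat := fun i j => b ((j + n - i) mod n)%nat.

Lemma lprod_perm b w1 w2 : Permutation w1 w2 -> lprod b w1 = lprod b w2.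
Proof. induction 1; simpl; try congruence; try ring. Qed.
Lemma lsum_perm w1 w2 : Permutation w1 w2 -> lsum w1 = lsum w2.
Proof. induction 1; simpl; lia. Qed.
Lemma lprod_app b w1 w2 : lprod b (w1 ++ w2) = lprod b w1 * lprod b w2.
Proof. induction w1; simpl. ring. rewrite IHw1; ring. Qed.
Lemma lsum_app w1 w2 : lsum (w1 ++ w2) = (lsum w1 + lsum w2)%nat.
Proof. induction w1; simpl; lia. Qed.
Lemma lprod_repeat b v c : lprod b (repeat v c) = b v ^ c.
Proof. induction c; simpl; auto. rewrite IHc; ring. Qed.
Lemma lsum_repeat v c : lsum (repeat v c) = (c * v)%nat.
Proof. induction c; simpl; lia. Qed.

Lemma lprod_bounds n b w : (forall x, (x<n)%nat -> 0 <= b x <= 1) -> Forall (fun x => (x<n)%nat) w ->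
  0 <= lprod b w <= 1.
Proof. intros Hb Hw; induction Hw; simpl. lra. specialize (Hb x H). nra. Qed.

Lemma walk_lower n b (Hn : (0<n)%nat) (Hb : forall x, (x<n)%nat -> 0 <= b x) w :
  Forall (fun x => (x<n)%nat) w ->
  forall i, (i<n)%nat -> lprod b w <= mpow n (circ n b) (length w) i ((i + lsum w) mod n).
Proof.
induction w as [|x w IH]; intros Hw i Hi; simpl.
- rewrite Nat.add_0_r, Nat.mod_small by lia. unfold mid. rewrite Nat.eqb_refl. lra.
- inversion Hw; subst. unfold mmul. set (k := ((i + lsum w) mod n)%nat).
  assert (Hk : (k < n)%nat) by (apply Nat.mod_upper_bound; lia).
  eapply Rle_trans; [| apply (bigmax_ge _ _ k Hk)]. simpl.
  rewrite mod_M3. fold k. unfold circ at 2. rewrite mod_M2 by auto.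
  rewrite Rmult_comm. apply Rmult_le_compat_r; auto.
Qed.

Lemma walk_upper n b (Hn : (0<n)%nat) (Hb : forall x, (x<n)%nat -> 0 <= b x) L : forall i j, (i<n)%nat -> (j<n)%nat ->
  mpow n (circ n b) L i j = 0 \/ exists w, length w = L /\ Forall (fun x => (x<n)%nat) w /\
   ((i + lsum w) mod n = j)%nat /\ mpow n (circ n b) L i j <= lprod b w.
Proof.
induction L; intros i j Hi Hj; simpl.
- unfold mid. destruct (Nat.eqb_spec i j).
  + right. exists []. simpl; repeat split; auto. rewrite Nat.add_0_r, Nat.mod_small; lia. lra.
  + left; auto.
- unfold mmul.
  destruct (bigmax_cases n (fun k => mpow n (circ n b) L i k * circ n b k j)) as [H|[k [Hk H]]].
  { left; auto. }
  rewrite H.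
  destruct (IHL i k Hi Hk) as [H0|[w [Hl [Hf [Hs Hle]]]]].
  { left. rewrite H0; ring. }
  right. exists (((j + n - k) mod n)%nat :: w). simpl; repeat split.
  + lia.
  + constructor; auto; apply Nat.mod_upper_bound; lia.
  + rewrite mod_M3, Hs. apply mod_M1; auto.
  + unfold circ. rewrite Rmult_comm. apply Rmult_le_compat_l; [apply Hb, Nat.mod_upper_bound; lia | exact Hle].
Qed.
Definition cnt (v : nat) (w : list nat) : nat := length (filter (Nat.eqb v) w).

Lemma filter_split (f : nat -> bool) w : length w = (length (filter f w) + length (filter (fun x => negb (f x)) w))%nat.
Proof. induction w; simpl; auto. destruct (f a); simpl; lia. Qed.

Lemma filter_filter_le (f g : nat -> bool) w : (length (filter f (filter g w)) <= length (filter f w))%nat.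
Proof. induction w; simpl; auto. destruct (g a); simpl; destruct (f a); simpl; lia. Qed.

Lemma pigeon k m : forall w, Forall (fun x => (x<m)%nat) w -> (length w > m*k)%nat ->
  exists v, (v<m)%nat /\ (cnt v w > k)%nat.
Proof.
induction m; intros w Hw Hl.
- destruct w; simpl in *. lia. inversion Hw; lia.
- destruct (le_gt_dec (cnt m w) k) as [Hc|Hc]; [|exists m; split; auto].
  set (w2 := filter (fun x => negb (Nat.eqb m x)) w).
  assert (Hw2 : Forall (fun x => (x<m)%nat) w2).
  { apply Forall_forall. intros x Hx. unfold w2 in Hx. apply filter_In in Hx as [Hx1 Hx2].
    rewrite Forall_forall in Hw. specialize (Hw x Hx1).
    apply Bool.negb_true_iff, Nat.eqb_neq in Hx2. lia. }
  pose proof (filter_split (Nat.eqb m) w). unfold cnt in Hc.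
  destruct (IHm w2 Hw2) as [v [Hv Hcv]]. { fold w2 in H. nia. }
  exists v. split. lia. unfold cnt in *. unfold w2 in Hcv.
  pose proof (filter_filter_le (Nat.eqb v) (fun x => negb (Nat.eqb m x)) w). lia.
Qed.

Lemma cnt_in v w : (cnt v w > 0)%nat -> In v w.
Proof. induction w; unfold cnt; simpl; intros. lia. destruct (Nat.eqb_spec v a). left; auto. right; auto. Qed.

Lemma extract c : forall v w, (cnt v w >= c)%nat -> exists w', Permutation w (repeat v c ++ w').
Proof.
induction c; intros v w H. { exists w; simpl; auto. }
assert (Hi : In v w) by (apply cnt_in; lia).
destruct (in_split _ _ Hi) as [w1 [w2 ->]].
assert (cnt v (w1 ++ v :: w2) = S (cnt v (w1 ++ w2))).
{ unfold cnt. rewrite !filter_app, !length_app. simpl. rewrite Nat.eqb_refl. simpl. lia. }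
destruct (IHc v (w1 ++ w2)) as [w' Hw']. lia.
exists w'. simpl. eapply perm_trans; [apply Permutation_sym, Permutation_middle | apply perm_skip; auto].
Qed.

Lemma pow_le1 x k : 0 <= x <= 1 -> 0 <= x ^ k <= 1.
Proof. intros. induction k; simpl; nra. Qed.

Lemma reduce_step n b (Hn : (0<n)%nat) (Hb : forall x, (x<n)%nat -> 0 <= b x <= 1) w :
  Forall (fun x => (x<n)%nat) w -> (length w > n*(n-1))%nat ->
  exists w', (length w' + n = length w)%nat /\ Forall (fun x => (x<n)%nat) w' /\
   (forall i, (i + lsum w) mod n = (i + lsum w') mod n)%nat /\ lprod b w <= lprod b w'.
Proof.
intros Hw Hl. destruct (pigeon (n-1) n w Hw Hl) as [v [Hv Hc]].
destruct (extract n v w ltac:(lia)) as [w' Hp].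
exists w'. split; [|split; [|split]].
- apply Permutation_length in Hp. rewrite length_app, repeat_length in Hp. lia.
- apply Forall_forall. intros x Hx. rewrite Forall_forall in Hw. apply Hw.
  apply Permutation_in with (repeat v n ++ w'). apply Permutation_sym; auto. apply in_or_app; auto.
- intros i. rewrite (lsum_perm _ _ Hp), lsum_app, lsum_repeat.
  replace (i + (n*v + lsum w'))%nat with ((i + lsum w') + n*v)%nat by lia. apply mod_M4.
- rewrite (lprod_perm b _ _ Hp), lprod_app, lprod_repeat.
  assert (Hw' : Forall (fun x => (x<n)%nat) w').
  { apply Forall_forall. intros x Hx. rewrite Forall_forall in Hw. apply Hw.
    apply Permutation_in with (repeat v n ++ w'). apply Permutation_sym; auto. apply in_or_app; auto. }
  pose proof (lprod_bounds n b w' Hb Hw'). pose proof (pow_le1 (b v) n (Hb v Hv)). nra.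
Qed.

Lemma reduce_iter n b (Hn : (0<n)%nat) (Hb : forall x, (x<n)%nat -> 0 <= b x <= 1) m : forall w,
  Forall (fun x => (x<n)%nat) w -> length w = (n*n + m*n)%nat ->
  exists w', length w' = (n*n)%nat /\ Forall (fun x => (x<n)%nat) w' /\
   (forall i, (i + lsum w) mod n = (i + lsum w') mod n)%nat /\ lprod b w <= lprod b w'.
Proof.
induction m; intros w Hw Hl.
- exists w. repeat split; auto. lia. lra.
- destruct (reduce_step n b Hn Hb w Hw ltac:(nia)) as [w1 [Hl1 [Hf1 [Hs1 Hp1]]]].
  destruct (IHm w1 Hf1 ltac:(lia)) as [w2 [Hl2 [Hf2 [Hs2 Hp2]]]].
  exists w2. repeat split; auto. intros i; rewrite Hs1; auto. lra.
Qed.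

Lemma argmax (a : nat -> R) n : (0<n)%nat -> exists s, (s<n)%nat /\ forall t, (t<n)%nat -> a t <= a s.
Proof.
induction n; intros H. lia. destruct (Nat.eq_dec n 0) as [->|Hn].
- exists 0%nat. split. lia. intros t Ht. replace t with 0%nat by lia. lra.
- destruct IHn as [s [Hs Hm]]. lia.
  destruct (Rle_dec (a n) (a s)).
  + exists s. split. lia. intros t Ht. destruct (Nat.eq_dec t n). subst; auto. apply Hm; lia.
  + exists n. split. lia. intros t Ht. destruct (Nat.eq_dec t n). subst; lra. specialize (Hm t ltac:(lia)). lra.
Qed.

Lemma bigprod_le k f c : (forall m, (m<k)%nat -> 0 <= f m <= c) -> 0 <= bigprod k f <= c^k.
Proof. induction k; intros H; simpl. lra. specialize (IHk ltac:(intros; apply H; lia)).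
specialize (H k ltac:(lia)). split; nra. Qed.

Lemma bigprod_const k f x : (forall m, (m<k)%nat -> f m = x) -> bigprod k f = x^k.
Proof. induction k; intros H; simpl. auto. rewrite IHk by (intros; apply H; lia). rewrite H by lia. ring. Qed.

Lemma rpow_k x k : 0 < x -> (0<k)%nat -> Rpower (x^k) (/ INR k) = x.
Proof. intros. rewrite <- Rpower_pow by auto. rewrite Rpower_mult. rewrite Rinv_r. apply Rpower_1; auto.
apply not_0_INR; lia. Qed.

Lemma gmean_upper n a s c : (0<n)%nat -> (forall t, (t<n)%nat -> 0 <= a t <= a s) -> 0 < a s ->
  is_cycle n c -> cycle_gmean (circulant n a) c <= a s.
Proof.
intros Hn Ha Hs [Hne [Hnd Hc]]. unfold cycle_gmean, gmean, cycle_weight.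
set (k := length c). assert (Hk : (0<k)%nat) by (unfold k; destruct c; simpl; [congruence|lia]).
set (w := bigprod k _).
assert (Hw : 0 <= w <= a s ^ k).
{ apply bigprod_le. intros m Hm. unfold circulant. apply Ha, Nat.mod_upper_bound. lia. }
destruct (Req_EM_T w 0). lra.
rewrite <- (rpow_k (a s) k) by auto.
apply Rle_Rpower_l. left. apply Rinv_0_lt_compat, lt_0_INR; auto. lra.
Qed.

Lemma least (P : nat -> Prop) m : P m -> exists k, P k /\ forall j, (j<k)%nat -> ~ P j.
Proof.
induction m as [m IH] using (well_founded_induction lt_wf). intros HP.
destruct (classic (exists j, (j<m)%nat /\ P j)) as [[j [Hj Pj]]|H].
- apply (IH j Hj Pj).
- exists m; split; auto. intros j Hj Pj; apply H; eauto.
Qed.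

Lemma cycle_exists n a s : (0<n)%nat -> (s<n)%nat -> 0 < a s ->
  exists c, is_cycle n c /\ cycle_gmean (circulant n a) c = a s.
Proof.
intros Hn Hs Has.
destruct (least (fun j => (0 < j)%nat /\ ((j*s) mod n = 0)%nat) n) as [k [[Hk Hks] Hmin]].
{ split; auto. rewrite Nat.mul_comm. apply Nat.Div0.mod_mul. }
set (c := map (fun m => ((m*s) mod n)%nat) (seq 0 k)).
assert (Hlc : length c = k) by (unfold c; rewrite length_map, length_seq; auto).
assert (Hnth : forall m, (m<k)%nat -> nth m c 0%nat = ((m*s) mod n)%nat).
{ intros m Hm.
  transitivity (nth m c ((fun m => ((m*s) mod n)%nat) 0%nat)). { apply nth_indep. rewrite Hlc; auto. }
  unfold c.
  rewrite (map_nth (fun m => ((m*s) mod n)%nat) (seq 0 k) 0%nat m). rewrite seq_nth by auto. f_equal. }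
exists c. split.
- split; [|split].
  + intros E. rewrite E in Hlc. simpl in Hlc. lia.
  + apply (NoDup_nth c 0%nat). rewrite Hlc. intros i j Hi Hj E. rewrite !Hnth in E by auto.
    destruct (Nat.lt_trichotomy i j) as [H|[H|H]]; auto.
    * exfalso. apply (Hmin (j-i)%nat). lia. split. lia. apply mod_sub with (i:=i); auto.
    * exfalso. apply (Hmin (i-j)%nat). lia. split. lia. apply mod_sub with (i:=j); auto.
  + intros i Hi. unfold c in Hi. apply in_map_iff in Hi as [m [<- _]]. apply Nat.mod_upper_bound; lia.
- unfold cycle_gmean, gmean, cycle_weight. rewrite Hlc.
  rewrite (bigprod_const k _ (a s)).
  + destruct (Req_EM_T (a s ^ k) 0) as [E|_].
    * exfalso. apply (pow_nonzero (a s) k); auto. lra.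
    * apply rpow_k; auto.
  + intros m Hm. assert (Hm1 : ((m+1) mod k < k)%nat) by (apply Nat.mod_upper_bound; lia).
    rewrite !Hnth by auto. unfold circulant. f_equal.
    assert (E : ((((m+1) mod k) * s) mod n = ((m*s) mod n + s) mod n)%nat).
    { rewrite Nat.Div0.add_mod_idemp_l.
      destruct (Nat.eq_dec (m+1) k) as [E|E].
      - replace (m*s+s)%nat with (k*s)%nat by (rewrite <- E; lia). rewrite Hks, E, Nat.Div0.mod_same. simpl. apply Nat.Div0.mod_0_l.
      - rewrite (Nat.mod_small (m+1) k) by lia. f_equal. lia. }
    rewrite E. apply mod_M2; auto. apply Nat.mod_upper_bound; lia.
Qed.

Lemma mmul_mid_l n (M : mat) i j : (i<n)%nat -> (forall k, 0 <= M k j) -> mmul n mid M i j = M i j.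
Proof.
intros Hi H0. unfold mmul. apply Rle_antisym.
- apply bigmax_le; auto. intros k Hk. unfold mid. destruct (Nat.eqb_spec i k). subst; lra. rewrite Rmult_0_l; auto.
- eapply Rle_trans; [| apply (bigmax_ge _ _ i Hi)]. simpl. unfold mid. rewrite Nat.eqb_refl. lra.
Qed.

Theorem lemma5 (n : nat) (a : nat -> R)
  (ha : forall t, (t < n)%nat -> 0 <= a t)
  (hnz : exists t, (t < n)%nat /\ a t <> 0)
  (l : R) (hl : is_lambda n (circulant n a) l) :
  let M := mpow n (mscale (/ l) (circulant n a)) (n ^ 2) in
  (forall i j, (i < n)%nat -> (j < n)%nat -> mmul n M M i j = M i j) /\
  (forall i, (i < n)%nat -> M i i = 1) /\
  (forall i j, (i < n)%nat -> (j < n)%nat -> M i j = mstar n M i j).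
Proof.
destruct hnz as [t0 [Ht0 Hat0]].
assert (Hn : (0 < n)%nat) by lia.
destruct (argmax a n Hn) as [s [Hs Hmax]].
assert (Has : 0 < a s) by (specialize (Hmax t0 Ht0); specialize (ha t0 Ht0); lra).
assert (Hl : l = a s).
{ destruct hl as [[c0 [Hc0 E]] Hall]. apply Rle_antisym.
  - rewrite <- E. apply gmean_upper; auto.
  - destruct (cycle_exists n a s Hn Hs Has) as [c [Hc E2]]. rewrite <- E2. apply Hall; auto. }
set (b := fun x => / l * a x).
assert (Hb : forall x, (x<n)%nat -> 0 <= b x <= 1).
{ intros x Hx. unfold b. rewrite Hl. specialize (ha x Hx). specialize (Hmax x Hx).
  assert (0 < / a s) by (apply Rinv_0_lt_compat; auto).
  split. nra. rewrite <- (Rinv_l (a s)) by lra. nra. }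
assert (Hb0 : forall x, (x<n)%nat -> 0 <= b x) by (intros; apply Hb; auto).
assert (Hbs : b s = 1) by (unfold b; rewrite Hl; apply Rinv_l; lra).
intro M.
assert (HM : M = mpow n (circ n b) (n*n)). { unfold M. f_equal. simpl. lia. }
clearbody M. subst M.
set (N := (n*n)%nat).
assert (Hle1 : forall i j, (i<n)%nat -> (j<n)%nat -> mpow n (circ n b) N i j <= 1).
{ intros i j Hi Hj. destruct (walk_upper n b Hn Hb0 N i j Hi Hj) as [E|[w [_ [Hf [_ Hle]]]]].
  rewrite E; lra. pose proof (lprod_bounds n b w Hb Hf). lra. }
assert (Hdiag : forall i, (i<n)%nat -> mpow n (circ n b) N i i = 1).
{ intros i Hi. apply Rle_antisym. auto.
  pose proof (walk_lower n b Hn Hb0 (repeat s N) ltac:(apply Forall_forall; intros x Hx; apply repeat_spec in Hx; lia) i Hi) as H.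
  rewrite repeat_length, lprod_repeat, lsum_repeat, Hbs, pow1 in H.
  replace (i + N * s)%nat with (i + n*(n*s))%nat in H by (unfold N; nia).
  rewrite mod_M4, Nat.mod_small in H by lia. exact H. }
assert (Hmm : forall i j, (i<n)%nat -> (j<n)%nat ->
   mmul n (mpow n (circ n b) N) (mpow n (circ n b) N) i j = mpow n (circ n b) N i j).
{ intros i j Hi Hj. unfold mmul. apply Rle_antisym.
  - apply bigmax_le. apply mpow_ge0. intros k Hk.
    destruct (walk_upper n b Hn Hb0 N i k Hi Hk) as [E|[w1 [Hl1 [Hf1 [Hs1 Hle1']]]]].
    { rewrite E, Rmult_0_l. apply mpow_ge0. }
    destruct (walk_upper n b Hn Hb0 N k j Hk Hj) as [E|[w2 [Hl2 [Hf2 [Hs2 Hle2']]]]].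
    { rewrite E, Rmult_0_r. apply mpow_ge0. }
    destruct (reduce_iter n b Hn Hb n (w1 ++ w2)) as [w' [Hl' [Hf' [Hs' Hp']]]].
    { apply Forall_app; auto. }
    { rewrite length_app. unfold N in *; lia. }
    pose proof (walk_lower n b Hn Hb0 w' Hf' i Hi) as H.
    rewrite Hl' in H. fold N in H. rewrite <- Hs' in H.
    rewrite lsum_app, Nat.add_assoc, <- Nat.Div0.add_mod_idemp_l, Hs1, Hs2 in H.
    rewrite lprod_app in Hp'.
    pose proof (mpow_ge0 n (circ n b) N i k). pose proof (mpow_ge0 n (circ n b) N k j).
    eapply Rle_trans; [| exact H]. eapply Rle_trans; [| exact Hp'].
    apply Rmult_le_compat; auto.
  - eapply Rle_trans; [| apply (bigmax_ge _ _ j Hj)]. simpl. rewrite Hdiag by auto. lra. }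
assert (Hpow : forall t, (1 <= t)%nat -> forall i j, (i<n)%nat -> (j<n)%nat ->
   mpow n (mpow n (circ n b) N) t i j = mpow n (circ n b) N i j).
{ induction t; intros Ht i j Hi Hj. lia. simpl.
  destruct (Nat.eq_dec t 0) as [->|Ht0'].
  - simpl. apply mmul_mid_l; auto. intros; apply mpow_ge0.
  - rewrite <- (Hmm i j Hi Hj). unfold mmul. apply bigmax_ext. intros k Hk.
    rewrite IHt; auto; lia. }
split; [exact Hmm | split; [exact Hdiag |]].
intros i j Hi Hj. unfold mstar. apply Rle_antisym.
- destruct (Nat.eq_dec i j) as [<-|Hij].
  + eapply Rle_trans; [| apply (bigmax_ge _ _ 0%nat Hn)]. simpl. unfold mid. rewrite Nat.eqb_refl, Hdiag; auto. lra.
  + assert (H1 : (1 < n)%nat) by lia. eapply Rle_trans; [| apply (bigmax_ge _ _ 1%nat H1)]. cbv beta. rewrite Hpow by auto. lra.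
- apply bigmax_le. apply mpow_ge0. intros t Ht. destruct t.
  + simpl. unfold mid. destruct (Nat.eqb_spec i j). subst; rewrite Hdiag; auto; lra. apply mpow_ge0.
  + cbv beta. rewrite Hpow by (auto; lia). lra.
Qed.
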